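(* Let $(A\mid R)$ be a finite presentation. Then either $(A\mid R)$ is firstly irreducible, or there is a finite sequence of presentations $(A\mid R)\leadsto_1(A_1\mid R_1)\leadsto_1\cdots\leadsto_1(A_n\mid R_n)$ in which each step is one of the transformations (I)–(III) and $(A_n\mid R_n)$ is firstly irreducible.
   Context: $\mathbb{M}_A$ is the free magma on a non-empty set $A$ (non-associative words with $x+y=(x,y)$); $\mathbb{M}_A^2$ has componentwise operation. A finite presentation is $(A\mid R)$ with $A$ finite non-empty and $R\subseteq\mathbb{M}_A^2$ finite. $\mathcal{G}(\mathbb{M}_A^2)=(A\times\mathbb{M}_A)\cup(\mathbb{M}_A\times A)$. For $p\in\mathbb{M}_A^2$, $\mathbf{g}(p)=\mathbf{g}(p_1)\cup\mathbf{g}(p_2)$ if $p=p_1+p_2$ with $p_1,p_2\in\mathbb{M}_A^2$, and $\mathbf{g}(p)=\{p\}$ otherwise; $\mathbf{g}(S)=\bigcup_{p\in S}\mathbf{g}(p)$. The transformations are: (I) if some $(x,y)\in R$ is not in $\mathcal{G}(\mathbb{M}_A^2)$, replace $(A\mid R)$ by $(A\mid\mathbf{g}(R))$. (II) if $(a,y),(a,y')\in R\cap(A\times(\mathbb{M}_A\setminus A))$ with $y\neq y'$, replace by $(A\mid (R\setminus\{(a,y')\})\cup\mathbf{g}((y,y')))$. (III) if $(x,b),(x',b)\in R\cap((\mathbb{M}_A\setminus A)\times A)$ with $x\neq x'$, replace by $(A\mid (R\setminus\{(x',b)\})\cup\mathbf{g}((x,x')))$. A presentation is firstly irreducible if none of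 (I)–(III) is applicable; $\leadsto_1$ denotes application of one of (I)–(III). *)

(* Defs.v *)
From Stdlib Require Import List.

Set Implicit Arguments.

(* The free magma M_A on A: non-associative words; op x y = (x,y) = x + y. *)
Inductive magma (A : Type) : Type :=
| gen : A -> magma A
| op : magma A -> magma A -> magma A.

Arguments gen {A} _.
Arguments op {A} _ _.

Definition pair (A : Type) := (magma A * magma A)%type.
Definition rels (A : Type) := pair A -> Prop.

Definition finite_set (T : Type) (S : T -> Prop) : Prop :=
  exists l : list T, forall t, S t <-> In t l.

Definition is_gen (A : Type) (x : magma A) : Prop := exists a, x = gen a.

Definition inG (A : Type) (p : pair A) : Prop := is_gen (fst p) \/ is_gen (snd p).

(* g(p): p = p1 + p2 in M_A^2 iff both components are products. *)
Fixpoint gpair (A : Type) (x y : magma A) : rels A :=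
  match x, y with
  | op x1 x2, op y1 y2 => fun q => gpair x1 y1 q \/ gpair x2 y2 q
  | _, _ => fun q => q = (x, y)
  end.

Definition g (A : Type) (p : pair A) : rels A := gpair (fst p) (snd p).

Definition gset (A : Type) (S : rels A) : rels A := fun q => exists p, S p /\ g p q.

Definition applicable_I (A : Type) (R : rels A) : Prop :=
  exists p, R p /\ ~ inG p.

Definition applicable_II (A : Type) (R : rels A) (a : A) (y y' : magma A) : Prop :=
  R (gen a, y) /\ R (gen a, y') /\ ~ is_gen y /\ ~ is_gen y' /\ y <> y'.

Definition applicable_III (A : Type) (R : rels A) (b : A) (x x' : magma A) : Prop :=
  R (x, gen b) /\ R (x', gen b) /\ ~ is_gen x /\ ~ is_gen x' /\ x <> x'.

(* One step (A|R) ~>_1 (A|R'); the generating set A is unchanged by (I)-(III). *)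
Definition step1 (A : Type) (R R' : rels A) : Prop :=
  (applicable_I R /\ R' = gset R)
  \/ (exists a y y', applicable_II R a y y' /\
        R' = (fun q => (R q /\ q <> (gen a, y')) \/ g (y, y') q))
  \/ (exists b x x', applicable_III R b x x' /\
        R' = (fun q => (R q /\ q <> (x', gen b)) \/ g (x, x') q)).

Definition firstly_irreducible (A : Type) (R : rels A) : Prop :=
  ~ applicable_I R
  /\ (forall a y y', ~ applicable_II R a y y')
  /\ (forall b x x', ~ applicable_III R b x x').

(* Main.v *)
Require Import Defs.
From Stdlib Require Import List Lia Arith Classical.
Import ListNotations.

Section S.
Variable A : Type.

Fixpoint msize (x : magma A) : nat :=
  match x with gen _ => 1 | op a b => S (msize a + msize b) end.

Lemma msize_pos x : 1 <= msize x.
Proof. destruct x; simpl; lia. Qed.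

Definition w (p : pair A) : nat := Nat.max (msize (fst p)) (msize (snd p)).

Fixpoint mu (l : list (pair A)) : nat :=
  match l with [] => 0 | p :: l => 2 ^ (w p) + mu l end.

Lemma mu_app l1 l2 : mu (l1 ++ l2) = mu l1 + mu l2.
Proof. induction l1; simpl; lia. Qed.

Fixpoint gl (x y : magma A) : list (pair A) :=
  match x, y with
  | op x1 x2, op y1 y2 => gl x1 y1 ++ gl x2 y2
  | _, _ => [(x, y)]
  end.

Lemma gl_spec x y q : gpair x y q <-> In q (gl x y).
Proof.
  revert y; induction x; intros y; destruct y; simpl; try (split; intuition congruence).
  rewrite in_app_iff, IHx1, IHx2; tauto.
Qed.

Lemma gpair_inG (x y : magma A) q : gpair x y q -> inG q.
Proof.
  revert y; induction x; intros y; destruct y; simpl; intros H;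
    try (subst; unfold inG, is_gen; simpl; eauto; fail).
  destruct H; eauto.
Qed.

Lemma pow4 m M : m + 2 <= M -> 4 * 2 ^ m <= 2 ^ M.
Proof.
  intros H. replace (4 * 2 ^ m) with (2 ^ (m + 2)).
  - apply Nat.pow_le_mono_r; lia.
  - rewrite Nat.pow_add_r. simpl. lia.
Qed.

Lemma mu_gl x y : mu (gl x y) <= 2 ^ (Nat.max (msize x) (msize y)).
Proof.
  revert y; induction x; intros y; destruct y; simpl; try (unfold w; simpl; lia).
  rewrite mu_app.
  specialize (IHx1 y1). specialize (IHx2 y2).
  pose proof (msize_pos x1). pose proof (msize_pos x2).
  pose proof (msize_pos y1). pose proof (msize_pos y2).
  pose proof (pow4 (Nat.max (msize x1) (msize y1))
    (S (Nat.max (msize x1 + msize x2) (msize y1 + msize y2))) ltac:(lia)).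
  pose proof (pow4 (Nat.max (msize x2) (msize y2))
    (S (Nat.max (msize x1 + msize x2) (msize y1 + msize y2))) ltac:(lia)).
  simpl (2 ^ S _) in *. lia.
Qed.

Lemma mu_gl_op x1 x2 y1 y2 :
  2 * mu (gl (op x1 x2) (op y1 y2)) <= 2 ^ (Nat.max (msize (op x1 x2)) (msize (op y1 y2))).
Proof.
  simpl. rewrite mu_app.
  pose proof (mu_gl x1 y1). pose proof (mu_gl x2 y2).
  pose proof (msize_pos x1). pose proof (msize_pos x2).
  pose proof (msize_pos y1). pose proof (msize_pos y2).
  pose proof (pow4 (Nat.max (msize x1) (msize y1))
    (S (Nat.max (msize x1 + msize x2) (msize y1 + msize y2))) ltac:(lia)).
  pose proof (pow4 (Nat.max (msize x2) (msize y2))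
    (S (Nat.max (msize x1 + msize x2) (msize y1 + msize y2))) ltac:(lia)).
  simpl (2 ^ S _) in *. lia.
Qed.

Lemma dedup l : exists l', NoDup l' /\ (forall t, In t l' <-> In t l) /\ mu l' <= mu l.
Proof.
  induction l as [|a l IH].
  - exists []; simpl; repeat split; auto; constructor.
  - destruct IH as [l' [N [E M]]].
    destruct (classic (In a l)) as [H|H].
    + exists l'; repeat split; auto.
      * intros Ht; right; apply E; auto.
      * intros [<-|Ht]; apply E; auto.
      * simpl; lia.
    + exists (a :: l'); repeat split.
      * constructor; auto. rewrite E; auto.
      * intros [<-|Ht]; [left; auto| right; apply E; auto].
      * intros [<-|Ht]; [left; auto| right; apply E; auto].
      * simpl; lia.
Qed.

Lemma remove1 l x : NoDup l -> In x l ->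
  exists l1, (forall t, In t l1 <-> In t l /\ t <> x) /\ mu l1 + 2 ^ (w x) <= mu l.
Proof.
  intros N H. destruct (in_split _ _ H) as [la [lb ->]].
  pose proof (NoDup_remove_2 _ _ _ N) as Hn.
  exists (la ++ lb); split.
  - intros t; rewrite !in_app_iff; simpl; split.
    + intros Ht; split; [tauto|]. intros ->. apply Hn; rewrite in_app_iff; auto.
    + intros [[Ht|[<-|Ht]] Hne]; tauto.
  - rewrite !mu_app; simpl; lia.
Qed.

Definition Q (R : rels A) : Prop :=
  firstly_irreducible R \/
  exists (n : nat) (Rs : nat -> rels A),
    1 <= n /\ Rs 0 = R /\
    (forall i, i < n -> step1 (Rs i) (Rs (S i))) /\
    firstly_irreducible (Rs n).

Lemma shift (R R' : rels A) : step1 R R' -> Q R' ->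
  exists (n : nat) (Rs : nat -> rels A),
    1 <= n /\ Rs 0 = R /\
    (forall i, i < n -> step1 (Rs i) (Rs (S i))) /\
    firstly_irreducible (Rs n).
Proof.
  intros St [Hi | [n [Rs [H1 [H0 [Hs Hf]]]]]].
  - exists 1, (fun i => match i with 0 => R | _ => R' end).
    split; [lia|split; [reflexivity|split; [|exact Hi]]].
    intros i Hi'. destruct i; [exact St| lia].
  - exists (S n), (fun i => match i with 0 => R | S j => Rs j end).
    split; [lia|split; [reflexivity|split; [|exact Hf]]].
    intros i Hi'. destruct i; [rewrite H0; exact St|]. apply Hs; lia.
Qed.

Lemma main N : forall (R : rels A) l, NoDup l -> (forall t, R t <-> In t l) ->
  (forall t, R t -> inG t) -> mu l < N -> Q R.
Proof.
  induction N as [|N IH]; intros R l Nd El HG Hmu; [lia|].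
  destruct (classic (firstly_irreducible R)) as [Hir|Hnir]; [left; exact Hir|].
  right.
  assert (nI : ~ applicable_I R).
  { intros [p [Rp Hp]]. apply Hp, HG, Rp. }
  assert (H23 : (exists a y y', applicable_II R a y y') \/
                (exists b x x', applicable_III R b x x')).
  { apply NNPP. intros Hn. apply Hnir. repeat split; auto.
    - intros a y y' H. apply Hn. left; eauto.
    - intros b x x' H. apply Hn. right; eauto. }
  destruct H23 as [[a [y0 [y0' Hap]]] | [b [x0 [x0' Hap]]]].
  - assert (Hw : exists y y', applicable_II R a y y' /\ msize y <= msize y').
    { destruct (le_lt_dec (msize y0) (msize y0')).
      - exists y0, y0'; auto.
      - exists y0', y0. split; [|lia].
        destruct Hap as [h1 [h2 [h3 [h4 h5]]]]. repeat split; auto. }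
    clear y0 y0' Hap. destruct Hw as [y [y' [Hap Hle]]].
    set (R' := fun q => (R q /\ q <> (gen a, y')) \/ g (y, y') q).
    apply (shift R R').
    { right; left. exists a, y, y'; split; auto. }
    destruct Hap as [h1 [h2 [h3 [h4 h5]]]].
    destruct (remove1 l (gen a, y') Nd (proj1 (El _) h2)) as [l1 [E1 M1]].
    destruct (dedup (l1 ++ gl y y')) as [l2 [N2 [E2 M2]]].
    apply (IH R' l2 N2).
    + intros t. rewrite E2, in_app_iff, E1, <- El, <- gl_spec. unfold R', g; simpl. tauto.
    + intros t [[Rt _]|Gt]; [apply HG; auto| exact (gpair_inG _ _ _ Gt)].
    + rewrite mu_app in M2.
      destruct y as [c|y1 y2]; [exfalso; apply h3; eexists; eauto|].
      destruct y' as [c|y1' y2']; [exfalso; apply h4; eexists; eauto|].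
      pose proof (mu_gl_op y1 y2 y1' y2').
      unfold w in M1; simpl fst in M1; simpl snd in M1.
      replace (Nat.max (msize (op y1 y2)) (msize (op y1' y2'))) with (msize (op y1' y2')) in H by lia.
      replace (Nat.max (msize (gen a)) (msize (op y1' y2'))) with (msize (op y1' y2')) in M1
        by (simpl; lia).
      pose proof (Nat.pow_nonzero 2 (msize (op y1' y2')) ltac:(lia)).
      lia.
  - assert (Hw : exists x x', applicable_III R b x x' /\ msize x <= msize x').
    { destruct (le_lt_dec (msize x0) (msize x0')).
      - exists x0, x0'; auto.
      - exists x0', x0. split; [|lia].
        destruct Hap as [h1 [h2 [h3 [h4 h5]]]]. repeat split; auto. }
    clear x0 x0' Hap. destruct Hw as [x [x' [Hap Hle]]].
    set (R' := fun q => (R q /\ q <> (x', gen b)) \/ g (x, x') q).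
    apply (shift R R').
    { right; right. exists b, x, x'; split; auto. }
    destruct Hap as [h1 [h2 [h3 [h4 h5]]]].
    destruct (remove1 l (x', gen b) Nd (proj1 (El _) h2)) as [l1 [E1 M1]].
    destruct (dedup (l1 ++ gl x x')) as [l2 [N2 [E2 M2]]].
    apply (IH R' l2 N2).
    + intros t. rewrite E2, in_app_iff, E1, <- El, <- gl_spec. unfold R', g; simpl. tauto.
    + intros t [[Rt _]|Gt]; [apply HG; auto| exact (gpair_inG _ _ _ Gt)].
    + rewrite mu_app in M2.
      destruct x as [c|x1 x2]; [exfalso; apply h3; eexists; eauto|].
      destruct x' as [c|x1' x2']; [exfalso; apply h4; eexists; eauto|].
      pose proof (mu_gl_op x1 x2 x1' x2').
      unfold w in M1; simpl fst in M1; simpl snd in M1.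
      replace (Nat.max (msize (op x1 x2)) (msize (op x1' x2'))) with (msize (op x1' x2')) in H by lia.
      replace (Nat.max (msize (op x1' x2')) (msize (gen b))) with (msize (op x1' x2')) in M1
        by (simpl; lia).
      pose proof (Nat.pow_nonzero 2 (msize (op x1' x2')) ltac:(lia)).
      lia.
Qed.

End S.

Theorem lemma7p9 (A : Type) (HAfin : finite_set (fun _ : A => True))
  (HAne : inhabited A) (R : rels A) (HR : finite_set R) :
  firstly_irreducible R \/
  exists (n : nat) (Rs : nat -> rels A),
    1 <= n /\ Rs 0 = R /\
    (forall i, i < n -> step1 (Rs i) (Rs (S i))) /\
    firstly_irreducible (Rs n).
Proof.
  destruct HR as [l El].
  destruct (classic (forall t, R t -> inG t)) as [HG|HnG].
  - destruct (dedup A l) as [l' [N' [E' _]]].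
    apply (main A (S (mu A l')) R l' N'); auto.
    intros t; rewrite E'; auto.
  - right.
    assert (HI : applicable_I R).
    { apply NNPP; intros Hn; apply HnG; intros t Rt.
      apply NNPP; intros Ht; apply Hn; exists t; auto. }
    apply (@shift A R (gset R)). { left; auto. }
    destruct (dedup A (flat_map (fun p : pair A => gl A (fst p) (snd p)) l)) as [l' [N' [E' _]]].
    apply (main A (S (mu A l')) (gset R) l' N'); auto.
    + intros t; rewrite E', in_flat_map. split.
      * intros [p [Rp Gp]]. exists p; split; [apply El; auto| apply (gl_spec A); exact Gp].
      * intros [p [Ip Gp]]. exists p; split; [apply El; auto| apply (gl_spec A); exact Gp].
    + intros t [p [_ Gp]]. exact (gpair_inG _ _ _ _ Gp).
Qed.
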